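(* Let $Q$ be a quiver, $\Bbbk$ an algebraically closed field, and $I\subset \Bbbk Q$ a non-zero two-sided ideal of the path algebra. Let $a\in I$ be written as $a=\sum_{\omega}c_\omega\,\omega$ (finite sum over paths $\omega$ of $Q$, $c_\omega\in\Bbbk$). Then every path $\omega$ with $c_\omega\neq 0$ which is the only path of $Q$ having its head and its tail (i.e. $\omega\in\mathcal{A}$) belongs to $I$.
   Context: Paths of $Q$ include the trivial paths $\varepsilon_x$ at each vertex $x$. Each path $\omega$ has a head $\mathbf{h}(\omega)$ and tail $\mathbf{t}(\omega)$; the product $\omega_1\omega_2$ of paths in $\Bbbk Q$ is their concatenation (first $\omega_2$, then $\omega_1$) if $\mathbf{h}(\omega_2)=\mathbf{t}(\omega_1)$ and $0$ otherwise; the paths form a basis of $\Bbbk Q$. $\mathcal{A}$ denotes the set of paths $\omega$ such that no other path $\upsilon\ne\omega$ satisfies $\mathbf{h}(\upsilon)=\mathbf{h}(\omega)$ and $\mathbf{t}(\upsilon)=\mathbf{t}(\omega)$. *)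

(* Defs.v *)
From HB Require Import structures.
From mathcomp Require Import all_boot all_order all_algebra.
From mathcomp Require Import finmap.
From mathcomp.multinomials Require Import monalg.

Set Implicit Arguments.
Unset Strict Implicit.
Unset Printing Implicit Defensive.

Import GRing.Theory.
Local Open Scope ring_scope.

Section Quiver.
(* A quiver: vertices V, arrows A, each arrow alpha has a tail [qt alpha]
   (its start) and a head [qh alpha] (its end). *)
Variables (V A : choiceType) (qt qh : A -> V).

Fixpoint valid (x : V) (s : seq A) : bool :=
  if s is a :: s' then (qt a == x) && valid (qh a) s' else true.

Definition qpath := {p : V * seq A | valid p.1 p.2}.

Definition ptail (w : qpath) : V := (val w).1.
Definition phead (w : qpath) : V := last (val w).1 [seq qh a | a <- (val w).2].

Definition ptriv (x : V) : qpath := @exist _ (fun p => valid p.1 p.2) (x, [::]) isT.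

(* [pcat w1 w2] : the concatenation w1 w2 (first w2, then w1), defined
   when h(w2) = t(w1). *)
Definition pcat (w1 w2 : qpath) : option qpath :=
  if phead w2 == ptail w1 then
    (insub (ptail w2, (val w2).2 ++ (val w1).2) : option qpath)
  else None.

Variable k : fieldType.

Definition pathalg := {malg k[qpath]}.

Definition pbasis (w : qpath) : pathalg := << w >>.

Definition pbmul (w1 w2 : qpath) : pathalg :=
  if pcat w1 w2 is Some w then << w >> else 0.

Definition pmul (a b : pathalg) : pathalg :=
  \sum_(u <- msupp a) \sum_(v <- msupp b) (a@_u * b@_v) *: pbmul u v.

Definition is_ideal (I : pathalg -> Prop) : Prop :=
  [/\ I 0,
      (forall x y, I x -> I y -> I (x + y)),
      (forall (c : k) x, I x -> I (c *: x)),
      (forall a x, I x -> I (pmul a x)) &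
      (forall a x, I x -> I (pmul x a))].

Definition inA (w : qpath) : Prop :=
  forall v : qpath, phead v = phead w -> ptail v = ptail w -> v = w.

End Quiver.

(* Main.v *)
Require Import Defs.
From HB Require Import structures.
From mathcomp Require Import all_boot all_order all_algebra.
From mathcomp Require Import finmap.
From mathcomp.multinomials Require Import monalg.
Local Open Scope ring_scope.

Import GRing.Theory.

Section Aux.
Variables (V A : choiceType) (qt qh : A -> V) (k : fieldType).
Local Notation P := (qpath qt qh).
Local Notation PA := (pathalg qt qh k).

Lemma msupp_basis (x : P) : msupp (pbasis k x) = [fset x]%fset.
Proof. by rewrite /pbasis msuppU oner_eq0. Qed.

Lemma sum_delta (s : seq P) (F : P -> k) z :
  uniq s -> (z \notin s -> F z = 0) ->
  \sum_(v <- s) F v * (v == z)%:R = F z.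
Proof.
move=> us Hz; case: (boolP (z \in s)) => zs.
  rewrite (bigD1_seq z) //= eqxx mulr1 big1 ?addr0 // => v /negbTE ->.
  by rewrite mulr0.
rewrite Hz // big1_seq // => v /= vs.
have -> : (v == z) = false by apply/eqP => e; rewrite -e vs in zs.
by rewrite mulr0.
Qed.

Lemma pbmul_trivl (x : V) (v : P) :
  pbmul k (ptriv qt qh x) v = if phead v == x then pbasis k v else 0.
Proof.
rewrite /pbmul /pcat /=.
case: eqP => // _.
case: insubP => [u _ Hu|].
  have -> : u = v by apply: val_inj; rewrite Hu; clear Hu; rewrite cats0; case: v => [[]].
  by [].
by case: v => [[x0 s] /= Hv]; rewrite cats0 Hv.
Qed.

Lemma pbmul_trivr (x : V) (v : P) :
  pbmul k v (ptriv qt qh x) = if ptail v == x then pbasis k v else 0.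
Proof.
rewrite /pbmul /pcat /phead /ptail /=.
case: (boolP (x == (val v).1)) => [/eqP ->|ne]; last first.
  by rewrite eq_sym (negbTE ne).
rewrite !eqxx.
case: insubP => [u _ Hu|].
  have -> : u = v by apply: val_inj; rewrite Hu; clear Hu; case: v => [[]].
  by [].
by case: v => [[x0 s] /= Hv]; rewrite Hv.
Qed.

Lemma pmul_trivl (x : V) (b : PA) z :
  (pmul (pbasis k (ptriv qt qh x)) b)@_z = if phead z == x then b@_z else 0.
Proof.
rewrite /pmul msupp_basis big_seq_fset1 raddf_sum /=.
under eq_bigr => v _ do rewrite mcoeffZ pbmul_trivl /pbasis mcoeffUU mul1r.
under eq_bigr => v _ do rewrite (fun_if (mcoeff z)) mcoeff0 mcoeffU.
have -> : \sum_(i <- msupp b) b@_i * (if phead i == x then (1 *+ (i == z)) else 0)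
  = \sum_(i <- msupp b) (if phead i == x then b@_i else 0) * (i == z)%:R.
  apply: eq_bigr => i _; case: (phead i == x); by rewrite ?mulr0 ?mul0r.
rewrite sum_delta ?fset_uniq //.
by move=> /mcoeff_outdom ->; case: ifP.
Qed.

Lemma pmul_trivr (x : V) (b : PA) z :
  (pmul b (pbasis k (ptriv qt qh x)))@_z = if ptail z == x then b@_z else 0.
Proof.
rewrite /pmul raddf_sum /=.
under eq_bigr => v _ do rewrite msupp_basis big_seq_fset1 mcoeffZ pbmul_trivr /pbasis mcoeffUU mulr1.
under eq_bigr => v _ do rewrite (fun_if (mcoeff z)) mcoeff0 mcoeffU.
have -> : \sum_(i <- msupp b) b@_i * (if ptail i == x then (1 *+ (i == z)) else 0)
  = \sum_(i <- msupp b) (if ptail i == x then b@_i else 0) * (i == z)%:R.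
  apply: eq_bigr => i _; case: (ptail i == x); by rewrite ?mulr0 ?mul0r.
rewrite sum_delta ?fset_uniq //.
by move=> /mcoeff_outdom ->; case: ifP.
Qed.

End Aux.

Theorem lemma1 (V A : choiceType) (qt qh : A -> V) (k : closedFieldType)
  (I : pathalg qt qh k -> Prop) :
  is_ideal I -> (exists x, I x /\ x <> 0) ->
  forall a : pathalg qt qh k, I a ->
  forall w : qpath qt qh, a@_w != 0 -> inA w -> I (pbasis k w).
Proof.
move=> [_ _ HZ HL HR] _ a Ia w aw Aw.
set c := pmul (pmul (pbasis k (ptriv qt qh (phead w))) a) (pbasis k (ptriv qt qh (ptail w))).
have Ic : I c by apply: HR; apply: HL.
have ce : c = a@_w *: pbasis k w.
  apply/malgP => z; rewrite mcoeffZ /pbasis mcoeffU pmul_trivr pmul_trivl.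
  case: (eqVneq z w) => [->|nzw]; first by rewrite !eqxx mulr1.
  rewrite mulr0.
  case: (eqVneq (ptail z) (ptail w)) => // Ht; case: (eqVneq (phead z) (phead w)) => // Hh.
  by case/eqP: nzw; apply: Aw.
have := HZ (a@_w)^-1 _ Ic; by rewrite ce scalerA mulVf // scale1r.
Qed.
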